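(* Let $p\ge 30$ be a prime such that $-1$ is a quadratic residue modulo $p$ and $2$ and $3$ are quadratic non-residues modulo $p$. Then the path system $\mathcal{P}_p$ on the Paley graph $G_p$ is irreducible.
   Context: Let $R$ and $N$ denote the sets of nonzero quadratic residues and quadratic non-residues in $\mathbb{F}_p$. The Paley graph $G_p$ has vertex set $\mathbb{F}_p$, with $a,b$ adjacent iff $a-b\in R$. A path system $\mathcal{P}$ in a graph $G=(V,E)$ is a collection of simple paths such that for every pair of distinct vertices $u,v$ there is exactly one path $P_{u,v}\in\mathcal{P}$ connecting them. A partition $V=A\sqcup B$ with $A,B\neq\emptyset$ is a reduction of $\mathcal{P}$ if for all $u,v\in A$ all vertices of $P_{u,v}$ lie in $A$, and for all $u,v\in B$ all vertices of $P_{u,v}$ lie in $B$; $\mathcal{P}$ is irreducible if it has no reduction. The path system $\mathcal{P}_p$ is defined for $a\neq b\in\mathbb{F}_p$ by: if $b-a\in R$, then $P_{a,b}=(a,b)$; if $b-a=3$, then $P_{a,b}=(a,a+1,a+2,b)$ (and $P_{b,a}$ is the same path); if $b-a\in N$ and $b-a\neq\pm3$, then $P_{a,b}=(a,\tfrac{a+b}{2},b)$. *)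

(* Defs.v *)
From HB Require Import structures.
From mathcomp Require Import all_boot all_order all_algebra.
Set Implicit Arguments. Unset Strict Implicit. Unset Printing Implicit Defensive.
Import Order.TTheory GRing.Theory Num.Theory.
Local Open Scope ring_scope.

Definition is_qr (p : nat) (x : 'F_p) : bool :=
  (x != 0) && [exists y : 'F_p, y ^+ 2 == x].

Definition is_qnr (p : nat) (x : 'F_p) : bool :=
  (x != 0) && ~~ [exists y : 'F_p, y ^+ 2 == x].

(* Vertex sequence of the path P_{a,b} of the path system P_p (for a <> b). *)
Definition paley_path (p : nat) (a b : 'F_p) : seq 'F_p :=
  if is_qr (b - a) then [:: a; b]
  else if b - a == 3%:R then [:: a; a + 1; a + 2%:R; b]
  else if a - b == 3%:R then [:: b; b + 1; b + 2%:R; a]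
  else [:: a; (a + b) / 2%:R; b].

Definition paley_reduction (p : nat) (A : {set 'F_p}) : Prop :=
  [/\ A != set0, ~: A != set0,
      (forall u v : 'F_p, u \in A -> v \in A -> u != v ->
         forall w, w \in paley_path u v -> w \in A)
    & (forall u v : 'F_p, u \notin A -> v \notin A -> u != v ->
         forall w, w \in paley_path u v -> w \notin A)].

Definition paley_irreducible (p : nat) : Prop :=
  forall A : {set 'F_p}, ~ paley_reduction A.

(* Main.v *)
Require Import Defs.
From HB Require Import structures.
From mathcomp Require Import all_boot all_order all_algebra.
From mathcomp Require Import all_field ring zify.
Import GRing.Theory.
Local Open Scope ring_scope.

Lemma bool_other (a b : bool) : (a = ~~ b -> False) -> a = b.
Proof. by case: a; case: b => // H; exfalso; apply: H. Qed.

Lemma nat_family (n : nat) : (8 <= n)%N -> exists k, (8 * 4 ^ k <= n < 32 * 4 ^ k)%N.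
Proof.
elim: n => [//|n IH] Hn.
case: (leqP 9 n.+1) => H9; last first.
  have -> : n.+1 = 8%N by lia.
  by exists 0%N.
have [k Hk] := IH (ltnSE H9).
case: (ltnP n.+1 (32 * 4 ^ k)) => H.
  exists k; lia.
exists k.+1; rewrite expnS; lia.
Qed.

Lemma nat_good (m : nat) : (5 <= m)%N -> exists h s, [/\ (0 < s)%N,
   (m + 2 <= 2 * h <= 2 * m + 2)%N,
   [\/ h = 4 * s * s, h = 6 * s * s | h = 9 * s * s]%N & (h = 9 \/ ~~ odd h)%N].
Proof.
move=> Hm.
have [k Hk] := nat_family (m + 3) ltac:(lia).
have K0 : (0 < 2 ^ k)%N by rewrite expn_gt0.
have E : (4 ^ k = 2 ^ k * 2 ^ k)%N by rewrite -expnMn.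
rewrite E in Hk.
case: (leqP (m + 2) (12 * (2 ^ k * 2 ^ k))) => H1.
  exists (6 * 2 ^ k * 2 ^ k)%N, (2 ^ k)%N; split.
  - by [].
  - lia.
  - by apply: Or32.
  - by right; rewrite -!mulnA oddM.
case: (leqP (m + 2) (18 * (2 ^ k * 2 ^ k))) => H2.
  exists (9 * 2 ^ k * 2 ^ k)%N, (2 ^ k)%N; split.
  - by [].
  - lia.
  - by apply: Or33.
  - case: k {Hk K0 E H1 H2} => [|k]; first by left.
    by right; rewrite -!mulnA !oddM oddX.
exists (4 * 2 ^ k.+1 * 2 ^ k.+1)%N, (2 ^ k.+1)%N; split.
- by rewrite expn_gt0.
- rewrite expnS; lia.
- by apply: Or31.
- by right; rewrite -!mulnA oddM.
Qed.

Section Main.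
Variable p : nat.
Hypothesis hp : prime p.
Hypothesis h30 : (30 <= p)%N.
Hypothesis h2 : is_qnr (2%:R : 'F_p).
Hypothesis h3 : is_qnr (3%:R : 'F_p).

Lemma natF_dvd (n : nat) : (n%:R : 'F_p) = 0 -> (p %| n)%N.
Proof. by move=> H; rewrite (dvdn_pcharf (pchar_Fp hp)) H. Qed.

Lemma natF_neq0 (n : nat) : (0 < n < p)%N -> (n%:R : 'F_p) != 0.
Proof.
move=> Hn; apply/negP => /eqP /natF_dvd H.
have := dvdn_leq (ltac:(lia) : (0 < n)%N) H; lia.
Qed.

Lemma qnr_nqr {x : 'F_p} : is_qnr x -> is_qr x = false.
Proof. by rewrite /is_qr /is_qnr => /andP [-> /negbTE ->]. Qed.

Lemma qnr_neq0 {x : 'F_p} : is_qnr x -> x != 0.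
Proof. by case/andP. Qed.

Lemma qnr_sq (a s : 'F_p) : is_qnr a -> s != 0 -> is_qnr (s ^+ 2 * a).
Proof.
move=> /andP [a0 na] s0; apply/andP; split.
  by rewrite mulf_neq0 // expf_neq0.
apply/negP => /existsP [y /eqP hy]; apply: (negP na).
apply/existsP; exists (y / s).
by rewrite expr_div_n hy (mulrC (s ^+ 2) a) mulfK // expf_neq0.
Qed.

Lemma path3 (u : 'F_p) : paley_path u (u + 3%:R) = [:: u; u + 1; u + 2%:R; u + 3%:R].
Proof.
rewrite /paley_path.
have -> : u + 3%:R - u = 3%:R by ring.
by rewrite (qnr_nqr h3) eqxx.
Qed.

Lemma pathmid (u v : 'F_p) : is_qnr (v - u) -> v - u != 3%:R -> u - v != 3%:R ->
  paley_path u v = [:: u; (u + v) / 2%:R; v].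
Proof.
by move=> H1 H2 H3; rewrite /paley_path (qnr_nqr H1) (negbTE H2) (negbTE H3).
Qed.

Variable A : {set 'F_p}.
Hypothesis hred : paley_reduction A.
Let C := fun w : 'F_p => w \in A.

Lemma cl {u v w : 'F_p} : C u = C v -> u != v -> w \in paley_path u v -> C w = C u.
Proof.
case: hred => _ _ HA HB; rewrite /C.
case Hu: (u \in A) => Huv uv hw.
  by apply: (HA u v) => //; rewrite -Huv.
by apply/negbTE; apply: (HB u v) => //; rewrite ?Hu -?Huv ?Hu.
Qed.

Lemma rule3 (u : 'F_p) : C u = C (u + 3%:R) -> C (u + 1) = C u /\ C (u + 2%:R) = C u.
Proof.
move=> H.
have uv : u != u + 3%:R.
  apply/negP => /eqP E; move: (qnr_neq0 h3).
  have -> : (3%:R : 'F_p) = (u + 3%:R) - u by ring.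
  by rewrite -E subrr eqxx.
by split; apply: (cl H uv); rewrite path3 !inE eqxx ?orbT.
Qed.

Lemma rulemid (u v : 'F_p) : is_qnr (v - u) -> v - u != 3%:R -> u - v != 3%:R ->
  C u = C v -> C ((u + v) / 2%:R) = C u.
Proof.
move=> H1 H2 H3 H.
have uv : u != v.
  by apply/negP => /eqP E; move: (qnr_neq0 H1); rewrite E subrr eqxx.
by apply: (cl H uv); rewrite pathmid // !inE eqxx orbT.
Qed.

Lemma two_neq0 : (2%:R : 'F_p) != 0.
Proof. by apply: natF_neq0; lia. Qed.

Lemma divr2 (w : 'F_p) : (2%:R * w) / 2%:R = w.
Proof. by rewrite mulrC mulKf // two_neq0. Qed.

Lemma neq_nat (a b : nat) : (a < b < p)%N -> (b%:R : 'F_p) != a%:R.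
Proof.
move=> Hn; rewrite -subr_eq0 -natrB; last lia.
apply: natF_neq0; lia.
Qed.

Lemma neq3 (n : nat) : (3 < n < p)%N -> (n%:R : 'F_p) != 3%:R.
Proof. by move=> H; apply: neq_nat; lia. Qed.

Lemma neqm3 (n : nat) : (0 < n)%N -> ~~ (p %| n + 3)%N -> (- (n%:R : 'F_p)) != 3%:R.
Proof.
move=> Hn Hd; apply/negP => /eqP E; apply: (negP Hd); apply: natF_dvd.
by rewrite natrD -E addrN.
Qed.

Variable x : 'F_p.
Hypothesis Hx : C (x + 1) = ~~ C x.

Definition Pm (m : nat) := forall t, (t <= m)%N ->
  C (x - t%:R) = C x /\ C (x + 1 + t%:R) = ~~ C x.

Lemma qnr8 : is_qnr (8%:R : 'F_p).
Proof.
have -> : (8%:R : 'F_p) = (2%:R) ^+ 2 * 2%:R by rewrite -!natrX -natrM.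
by apply: qnr_sq => //; apply: two_neq0.
Qed.

Lemma base : Pm 5.
Proof.
have n2 : (2%:R : 'F_p) != 3%:R by rewrite eq_sym; apply: neq_nat; lia.
have nm2 : - (2%:R : 'F_p) != 3%:R by apply: neqm3 => //; apply/negP => /dvdn_leq; lia.
have n8 : (8%:R : 'F_p) != 3%:R by apply: neq3; lia.
have nm8 : - (8%:R : 'F_p) != 3%:R by apply: neqm3 => //; apply/negP => /dvdn_leq; lia.
have fm2 : C (x - 2%:R) = C x.
  apply: bool_other => E.
  have := rule3 (x - 2%:R).
  have -> : x - 2%:R + 3%:R = x + 1 by ring.
  have -> : x - 2%:R + 2%:R = x by ring.
  rewrite Hx E => /(_ erefl) [_]; by case: (C x).
have fm1 : C (x - 1) = C x.
  have := rulemid (x - 2%:R) (x).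
  have -> : x - (x - 2%:R) = 2%:R by ring.
  have -> : x - 2%:R - x = - 2%:R by ring.
  have -> : (x - 2%:R + x) = 2%:R * (x - 1) by ring.
  by rewrite divr2 fm2 => /(_ h2 n2 nm2 erefl).
have f3 : C (x + 3%:R) = ~~ C x.
  apply: bool_other; rewrite negbK => E.
  have := rule3 (x); rewrite E Hx => /(_ erefl) [];
  by case: (C x).
have f2 : C (x + 2%:R) = ~~ C x.
  have := rulemid (x + 1) (x + 3%:R).
  have -> : x + 3%:R - (x + 1) = 2%:R by ring.
  have -> : x + 1 - (x + 3%:R) = - 2%:R by ring.
  have -> : (x + 1 + (x + 3%:R)) = 2%:R * (x + 2%:R) by ring.
  by rewrite divr2 Hx f3 => /(_ h2 n2 nm2 erefl).
have fm5 : C (x - 5%:R) = C x.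
  apply: bool_other => E.
  have := rulemid (x - 5%:R) (x + 3%:R).
  have -> : x + 3%:R - (x - 5%:R) = 8%:R by ring.
  have -> : x - 5%:R - (x + 3%:R) = - 8%:R by ring.
  have -> : (x - 5%:R + (x + 3%:R)) = 2%:R * (x - 1) by ring.
  rewrite divr2 fm1 E f3 => /(_ qnr8 n8 nm8 erefl); by case: (C x).
have [fm4 fm3] : C (x - 4%:R) = C x /\ C (x - 3%:R) = C x.
  have := rule3 (x - 5%:R).
  have -> : x - 5%:R + 3%:R = x - 2%:R by ring.
  have -> : x - 5%:R + 1 = x - 4%:R by ring.
  have -> : x - 5%:R + 2%:R = x - 3%:R by ring.
  by rewrite fm5 fm2 => /(_ erefl) [-> ->].
have f6 : C (x + 6%:R) = ~~ C x.
  apply: bool_other; rewrite negbK => E.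
  have := rulemid (x - 2%:R) (x + 6%:R).
  have -> : x + 6%:R - (x - 2%:R) = 8%:R by ring.
  have -> : x - 2%:R - (x + 6%:R) = - 8%:R by ring.
  have -> : (x - 2%:R + (x + 6%:R)) = 2%:R * (x + 2%:R) by ring.
  rewrite divr2 fm2 E f2 => /(_ qnr8 n8 nm8 erefl); by case: (C x).
have [f4 f5] : C (x + 4%:R) = ~~ C x /\ C (x + 5%:R) = ~~ C x.
  have := rule3 (x + 3%:R).
  have -> : x + 3%:R + 3%:R = x + 6%:R by ring.
  have -> : x + 3%:R + 1 = x + 4%:R by ring.
  have -> : x + 3%:R + 2%:R = x + 5%:R by ring.
  by rewrite f3 f6 => /(_ erefl) [-> ->].
move=> t; case: t => [|[|[|[|[|[|//]]]]]] _.
- by rewrite subr0 addr0 Hx.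
- have -> : x + 1 + 1%:R = x + 2%:R by ring.
  by [].
- have -> : x + 1 + 2%:R = x + 3%:R by ring.
  by [].
- have -> : x + 1 + 3%:R = x + 4%:R by ring.
  by [].
- have -> : x + 1 + 4%:R = x + 5%:R by ring.
  by [].
- have -> : x + 1 + 5%:R = x + 6%:R by ring.
  by [].
Qed.


Variable q : nat.
Hypothesis hq : p = (4 * q + 1)%N.

Lemma goodd (m : nat) : (5 <= m)%N -> (2 * m + 3 <= p)%N -> exists h,
  [/\ (m + 2 <= 2 * h <= 2 * m + 2)%N, is_qnr ((2 * h)%:R : 'F_p),
      ((2 * h)%:R : 'F_p) != 3%:R & - ((2 * h)%:R : 'F_p) != 3%:R].
Proof.
move=> Hm Hp.
have [h [s [s0 Hr Hf Hev]]] := nat_good m Hm.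
exists h; split => //.
- case: Hf => Hh; rewrite Hh.
  + rewrite (_ : (2 * (4 * s * s) = (2 * s) * (2 * s) * 2)%N); last by nia.
    rewrite natrM [X in X * _]natrM -expr2; apply: qnr_sq => //; apply: natF_neq0; nia.
  + rewrite (_ : (2 * (6 * s * s) = (2 * s) * (2 * s) * 3)%N); last by nia.
    rewrite natrM [X in X * _]natrM -expr2; apply: qnr_sq => //; apply: natF_neq0; nia.
  + rewrite (_ : (2 * (9 * s * s) = (3 * s) * (3 * s) * 2)%N); last by nia.
    rewrite natrM [X in X * _]natrM -expr2; apply: qnr_sq => //; apply: natF_neq0; nia.
- apply: neq3; lia.
- apply: neqm3; first lia.
  apply/negP => /dvdnP [k Hk].
  have Hk1 : k = 1%N by nia.
  rewrite Hk1 mul1n in Hk.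
  case: Hev => [H9|Hodd]; first lia.
  move: (odd_double_half h); rewrite (negbTE Hodd) add0n -muln2 => Hh.
  lia.
Qed.

Lemma stepA (m : nat) : (5 <= m)%N -> (2 * m + 3 <= p)%N -> Pm m ->
  C (x - (m + 1)%:R) = C x.
Proof.
move=> Hm Hp P.
have [h [Hr Hq Hn3 Hm3]] := goodd m Hm Hp.
set n1 := (m + 1)%N.
set a := (2 * h - m - 2)%N.
set t := (m + 1 - h)%N.
have Ha : (a <= m)%N by lia.
have Ht : (t <= m)%N by lia.
have E2 : ((2 * h)%:R : 'F_p) = a%:R + n1%:R + 1.
  by rewrite -natrD natr1; congr _%:R; rewrite /a /n1; lia.
have E1 : (n1%:R : 'F_p) = a%:R + t%:R + t%:R + 1.
  by rewrite -!natrD natr1; congr _%:R; rewrite /a /n1 /t; lia.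
have Cz := (P a Ha).2.
have Cm := (P t Ht).1.
apply: bool_other => E.
have := rulemid (x - n1%:R) (x + 1 + a%:R).
have -> : x + 1 + a%:R - (x - n1%:R) = (2 * h)%:R by rewrite E2; ring.
have -> : x - n1%:R - (x + 1 + a%:R) = - (2 * h)%:R by rewrite E2; ring.
have -> : x - n1%:R + (x + 1 + a%:R) = 2%:R * (x - t%:R) by rewrite E1; ring.
rewrite divr2 Cm E Cz => /(_ Hq Hn3 Hm3 erefl).
by case: (C x).
Qed.

Lemma stepB (m : nat) : (5 <= m)%N -> (2 * m + 3 <= p)%N -> Pm m ->
  C (x + 1 + (m + 1)%:R) = ~~ C x.
Proof.
move=> Hm Hp P.
have [h [Hr Hq Hn3 Hm3]] := goodd m Hm Hp.
set n1 := (m + 1)%N.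
set a := (2 * h - m - 2)%N.
set t := (m + 1 - h)%N.
have Ha : (a <= m)%N by lia.
have Ht : (t <= m)%N by lia.
have E2 : ((2 * h)%:R : 'F_p) = a%:R + n1%:R + 1.
  by rewrite -natrD natr1; congr _%:R; rewrite /a /n1; lia.
have E1 : (n1%:R : 'F_p) = a%:R + t%:R + t%:R + 1.
  by rewrite -!natrD natr1; congr _%:R; rewrite /a /n1 /t; lia.
have Cz := (P a Ha).1.
have Cm := (P t Ht).2.
apply: bool_other; rewrite negbK => E.
have := rulemid (x - a%:R) (x + 1 + n1%:R).
have -> : x + 1 + n1%:R - (x - a%:R) = (2 * h)%:R by rewrite E2; ring.
have -> : x - a%:R - (x + 1 + n1%:R) = - (2 * h)%:R by rewrite E2; ring.
have -> : x - a%:R + (x + 1 + n1%:R) = 2%:R * (x + 1 + t%:R) by rewrite E1; ring.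
rewrite divr2 Cm E Cz => /(_ Hq Hn3 Hm3 erefl).
by case: (C x).
Qed.

Lemma allP (m : nat) : (5 <= m)%N -> (2 * m + 1 <= p)%N -> Pm m.
Proof.
elim: m => [//|m IH] H5 Hp.
case: (ltnP m 5) => Hm.
  have -> : m.+1 = 5%N by lia.
  exact: base.
have P := IH Hm ltac:(lia).
move=> t Ht; case: (ltnP m t) => Htm; last exact: P.
have -> : t = (m + 1)%N by lia.
split; [apply: stepA | apply: stepB] => //; lia.
Qed.

Lemma final : False.
Proof.
have P := allP (2 * q)%N ltac:(lia) ltac:(lia).
have [H1 H2] := P (2 * q)%N (leqnn _).
have E0 : ((2 * q)%:R + (2 * q)%:R + 1 : 'F_p) = 0.
  by rewrite -natrD natr1 -(pchar_Fp_0 hp); congr _%:R; lia.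
have E : x + 1 + (2 * q)%:R = x - (2 * q)%:R + ((2 * q)%:R + (2 * q)%:R + 1).
  by ring.
move: H2; rewrite E E0 addr0 H1.
by case: (C x).
Qed.

End Main.

Lemma p_mod4 (p : nat) : prime p -> (30 <= p)%N -> is_qr (- 1 : 'F_p) ->
  p = (4 * (p %/ 4) + 1)%N.
Proof.
move=> hp h30 /andP [_ /existsP [i /eqP hi]].
have two0 : (2%:R : 'F_p) != 0.
  apply/negP => /eqP H.
  have : (p %| 2)%N by rewrite (dvdn_pcharf (pchar_Fp hp)) H.
  move/dvdn_leq => /(_ erefl); lia.
have i0 : i != 0.
  apply/negP => /eqP i0; move: hi; rewrite i0 expr0n /= => /eqP.
  by rewrite eq_sym oppr_eq0 oner_eq0.
have F : i ^+ p = i by rewrite -{2}(expf_card i) card_Fp.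
have odp : odd p.
  by apply/negPn/negP => /(prime_oddPn hp) H; lia.
have D := divn_eq p 4.
have Hr : (p %% 4 < 4)%N by rewrite ltn_pmod.
set r := (p %% 4)%N in D Hr.
set k := (p %/ 4)%N in D *.
have [Hr1|Hr1] := eqVneq r 1%N; first lia.
clearbody r k.
have Hr3 : r = 3%N.
  move: odp Hr Hr1; rewrite D oddD oddM andbF /=.
  by case: (r) => [|[|[|[|r']]]].
exfalso.
have F' : i ^+ (k * 4 + r) = i by rewrite -D.
move: F'; rewrite Hr3 (_ : (k * 4 + 3 = 2 * (2 * k + 1) + 1)%N); last lia.
rewrite exprD exprM hi -signr_odd (_ : odd (2 * k + 1) = true); last first.
  by rewrite addn1 /= oddM.
rewrite /= !expr1 mulN1r.
move=> /eqP; rewrite -subr_eq0 (_ : - i - i = - (2%:R * i)); last by ring.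
by rewrite oppr_eq0 mulf_eq0 (negbTE two0) (negbTE i0).
Qed.


Theorem proposition2p1 (p : nat) (hp : prime p) (h30 : (30 <= p)%N)
  (hm1 : is_qr (- 1 : 'F_p)) (h2 : is_qnr (2%:R : 'F_p))
  (h3 : is_qnr (3%:R : 'F_p)) :
  paley_irreducible p.
Proof.
move=> A hred.
have hq := p_mod4 p hp h30 hm1.
case: (boolP [exists x : 'F_p, (x + 1 \in A) != (x \in A)]).
  move=> /existsP [x Hne].
  have Hx : (x + 1 \in A) = ~~ (x \in A).
    by move: Hne; case: (x + 1 \in A); case: (x \in A).
  exact: (final p hp h30 h2 h3 A hred x Hx _ hq).
rewrite negb_exists => /forallP H.
have Hn : forall n : nat, ((n%:R : 'F_p) \in A) = (0 \in A).
  elim => // n IH; rewrite -natr1.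
  by move: (H (n%:R)); rewrite negbK => /eqP ->.
have Hw : forall w : 'F_p, (w \in A) = (0 \in A).
  move=> w; have -> : w = (val w)%:R.
    apply: val_inj; rewrite /= val_Fp_nat // modn_small //.
    by apply: leq_trans (ltn_ord w) _; rewrite Fp_cast.
  exact: Hn.
case: hred => /set0Pn [a Ha] /set0Pn [b Hb] _ _.
by move: Hb; rewrite inE Hw -(Hw a) Ha.
Qed.
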